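(* Let $l$ be a positive integer, $\epsilon\in(0,1)$, $\varphi\in\mathbb{R}$, and let $N$ be a positive integer with $N\ge 5.34\ln(4l/\epsilon)$. Let $N_x\sim\mathrm{Bin}\big(N,(1+\cos(2\pi\varphi))/2\big)$ and $N_y\sim\mathrm{Bin}\big(N,(1+\sin(2\pi\varphi))/2\big)$ be independent. Then $$\Pr\Big(\Big|\frac{N_x}{N}-\frac{1+\cos(2\pi\varphi)}{2}\Big|\le 0.306\Big)\ge\sqrt{1-\epsilon/l},\qquad \Pr\Big(\Big|\frac{N_y}{N}-\frac{1+\sin(2\pi\varphi)}{2}\Big|\le 0.306\Big)\ge\sqrt{1-\epsilon/l},$$ and, with $t=\frac{1}{2\pi}\big(\mathrm{atan2}(2N_y/N-1,2N_x/N-1)\big)_{\mathrm{mod}\,2\pi}$ and $x=(t-1/6)_{\mathrm{mod}\,1}$, the probability that $\big((\varphi)_{\mathrm{mod}\,1}-x\big)_{\mathrm{mod}\,1}\in(0,1/3)$ is at least $1-\epsilon/l$.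
   Context: $N_x$ and $N_y$ model the numbers of outcomes $1$ in $N$ measurements of the qubit state $(|0\rangle+e^{i2\pi\varphi}|1\rangle)/\sqrt2$ with the POVMs $\{|\psi_x\rangle\langle\psi_x|,\mathbb{I}-|\psi_x\rangle\langle\psi_x|\}$, $|\psi_x\rangle=(|0\rangle+|1\rangle)/\sqrt2$, and $\{|\psi_y\rangle\langle\psi_y|,\mathbb{I}-|\psi_y\rangle\langle\psi_y|\}$, $|\psi_y\rangle=(|0\rangle+i|1\rangle)/\sqrt2$, respectively. $(a)_{\mathrm{mod}\,c}$ is the representative of $a$ in $[0,c)$; $\mathrm{atan2}(y,x)$ is the polar angle of $(x,y)$ (with any fixed convention at $(0,0)$). *)

(* Defs.v *)
From Stdlib Require Import Reals Lra ClassicalEpsilon.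
Open Scope R_scope.

(* Representative of a in [0, c) (for c > 0): a - c * floor(a/c).
   Int_part r = up r - 1 is the floor of r. *)
Definition fmod (a c : R) : R := a - c * IZR (Int_part (a / c)).

(* Polar angle of (x, y) in (-PI, PI]; value c0 at the origin
   (the convention at (0,0) is a parameter, quantified in the theorem). *)
Definition atan2 (c0 y x : R) : R :=
  if Rlt_dec 0 x then atan (y / x)
  else if Rlt_dec x 0 then
    (if Rle_dec 0 y then atan (y / x) + PI else atan (y / x) - PI)
  else if Rlt_dec 0 y then PI / 2
  else if Rlt_dec y 0 then - (PI / 2)
  else c0.

Definition binom_pmf (N : nat) (p : R) (k : nat) : R :=
  C N k * p ^ k * (1 - p) ^ (N - k).

Definition indic (P : Prop) : R :=
  if excluded_middle_informative P then 1 else 0.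

(* Probability of the event E (Nx, Ny) when Nx ~ Bin(N, p) and
   Ny ~ Bin(N, q) are independent: joint pmf is the product. *)
Definition prob_indep_binom (N : nat) (p q : R) (E : nat -> nat -> Prop) : R :=
  sum_f_R0 (fun a =>
    sum_f_R0 (fun b => binom_pmf N p a * binom_pmf N q b * indic (E a b)) N) N.

(* Main.v *)
Require Import Defs.
From Stdlib Require Import Reals Lra Lia ZArith ClassicalEpsilon.
From Coquelicot Require Coquelicot.
Open Scope R_scope.

Module HL.
Import Coquelicot.Coquelicot.


Lemma exp_le' x y : x <= y -> exp x <= exp y.
Proof. intros [H|H]; [left; apply exp_increasing; auto| subst; lra]. Qed.

Lemma decr_from0 (f f' : R -> R) (s : R) :
  0 <= s -> (forall c, derivable_pt_lim f c (f' c)) -> (forall c, 0 <= c -> f' c <= 0) ->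
  f s <= f 0.
Proof.
  intros Hs Hd Hn. destruct Hs as [Hs|Hs]; [|subst; lra].
  destruct (MVT_cor2 f f' 0 s Hs (fun c _ => Hd c)) as [c [Hc1 Hc2]].
  assert (f' c <= 0) by (apply Hn; lra). nra.
Qed.

Lemma hoeff_lemma (p s : R) : 0 <= p <= 1 -> 0 <= s ->
  1 - p + p * exp s <= exp (s * p + s * s / 8).
Proof.
  intros Hp Hs.
  assert (HD : forall x, 0 < 1 - p + p * exp x).
  { intro x. pose proof (exp_pos x). destruct (Req_dec p 0). subst; lra. nra. }
  set (u := fun x => p * exp x / (1 - p + p * exp x)).
  assert (H1 : forall x, 0 <= x -> u x - p - x / 4 <= 0).
  { intros x Hx.
    assert (E: u x - p - x/4 <= u 0 - p - 0/4).
    { apply (decr_from0 (fun x => u x - p - x/4) (fun x => u x * (1 - u x) - 1/4)); auto.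
      - intro c. apply is_derive_Reals. unfold u.
        auto_derive. specialize (HD c). lra.
        specialize (HD c). field. lra.
      - intros c _. pose proof (Rle_0_sqr (u c - 1/2)). unfold Rsqr in *. nra. }
    assert (u 0 = p) by (unfold u; rewrite exp_0; field; lra). lra. }
  assert (H2 : ln (1 - p + p * exp s) - s * p - s * s / 8 <= 0).
  { assert (E: ln (1 - p + p * exp s) - s * p - s * s / 8 <= ln (1 - p + p * exp 0) - 0 * p - 0 * 0 / 8).
    { apply (decr_from0 (fun x => ln (1 - p + p * exp x) - x * p - x * x / 8) (fun x => u x - p - x / 4)); auto.
      intro c. apply is_derive_Reals. unfold u. auto_derive. specialize (HD c). lra.
      specialize (HD c). field. lra. }
    rewrite exp_0 in E. replace (1 - p + p * 1) with 1 in E by ring. rewrite ln_1 in E. lra. }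
  rewrite <- (exp_ln (1 - p + p * exp s)) by auto. apply exp_le'. lra.
Qed.

End HL.


Lemma exp_le' x y : x <= y -> exp x <= exp y.
Proof. intros [H|H]; [left; apply exp_increasing; auto| subst; lra]. Qed.

Lemma exp_mul_nat s n : exp (s * INR n) = exp s ^ n.
Proof.
  induction n. simpl. rewrite Rmult_0_r, exp_0. auto.
  rewrite S_INR, Rmult_plus_distr_l, Rmult_1_r, exp_plus, IHn. simpl. ring.
Qed.

Lemma C_nonneg n k : 0 <= Binomial.C n k.
Proof.
  unfold Binomial.C. apply Rmult_le_pos. apply pos_INR.
  left; apply Rinv_0_lt_compat. apply Rmult_lt_0_compat; apply lt_0_INR, Factorial.lt_O_fact.
Qed.

Lemma pmf_nonneg N p k : 0 <= p <= 1 -> 0 <= binom_pmf N p k.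
Proof.
  intros Hp. unfold binom_pmf. apply Rmult_le_pos; [apply Rmult_le_pos; [apply C_nonneg| apply pow_le; lra]| apply pow_le; lra].
Qed.

Lemma mgf N p s : sum_f_R0 (fun k => binom_pmf N p k * exp (s * INR k)) N = (p * exp s + (1 - p)) ^ N.
Proof.
  rewrite binomial. apply sum_eq. intros i _. unfold binom_pmf.
  rewrite exp_mul_nat, Rpow_mult_distr. ring.
Qed.

Lemma pmf_sum N p : sum_f_R0 (fun k => binom_pmf N p k) N = 1.
Proof.
  replace 1 with ((p + (1 - p)) ^ N) by (replace (p + (1-p)) with 1 by ring; apply pow1).
  rewrite binomial. apply sum_eq. intros; unfold binom_pmf; ring.
Qed.

Lemma indic_true (P : Prop) : P -> indic P = 1.
Proof. intros H; unfold indic; destruct (excluded_middle_informative P); tauto. Qed.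
Lemma indic_false (P : Prop) : ~ P -> indic P = 0.
Proof. intros H; unfold indic; destruct (excluded_middle_informative P); tauto. Qed.
Lemma indic_bounds (P : Prop) : 0 <= indic P <= 1.
Proof. unfold indic; destruct (excluded_middle_informative P); lra. Qed.

Definition hoeff_lemma := HL.hoeff_lemma.

Lemma exp_ge1 x : 0 <= x -> 1 <= exp x.
Proof. intros H. rewrite <- exp_0. apply exp_le'. auto. Qed.

Lemma tail N p d s : (0 < N)%nat -> 0 <= p <= 1 -> 0 < d -> 0 <= s ->
  sum_f_R0 (fun k => binom_pmf N p k * indic (Rabs (INR k / INR N - p) <= d)) N
  >= 1 - 2 * exp (INR N * (s * s / 8 - s * d)).
Proof.
  intros HN Hp Hd Hs.
  assert (HNr : 0 < INR N) by (apply lt_0_INR; auto).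
  set (A := exp (- s * INR N * (p + d))).
  set (B := exp (s * INR N * (p - d))).
  assert (Hle : sum_f_R0 (fun k => binom_pmf N p k - (binom_pmf N p k * exp (s * INR k) * A
              + binom_pmf N p k * exp (- s * INR k) * B)) N <=
           sum_f_R0 (fun k => binom_pmf N p k * indic (Rabs (INR k / INR N - p) <= d)) N).
  { apply sum_Rle. intros k _.
    pose proof (pmf_nonneg N p k Hp) as Hpk.
    assert (0 <= exp (s * INR k) * A) by (left; apply Rmult_lt_0_compat; apply exp_pos).
    assert (0 <= exp (- s * INR k) * B) by (left; apply Rmult_lt_0_compat; apply exp_pos).
    destruct (Rle_dec (Rabs (INR k / INR N - p)) d) as [G|G].
    - rewrite indic_true by auto. nra.
    - rewrite indic_false by auto.
      apply Rnot_le_lt in G. unfold Rabs in G. destruct (Rcase_abs _) in G.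
      + assert (INR k < INR N * (p - d)).
        { assert (INR k / INR N < p - d) by lra.
          apply (Rmult_lt_compat_l (INR N)) in H1; auto. field_simplify in H1; lra. }
        assert (1 <= exp (- s * INR k) * B).
        { unfold B. rewrite <- exp_plus. apply exp_ge1. nra. }
        nra.
      + assert (INR N * (p + d) < INR k).
        { assert (p + d < INR k / INR N) by lra.
          apply (Rmult_lt_compat_l (INR N)) in H1; auto. field_simplify in H1; lra. }
        assert (1 <= exp (s * INR k) * A).
        { unfold A. rewrite <- exp_plus. apply exp_ge1. nra. }
        nra. }
  rewrite minus_sum, sum_plus, pmf_sum in Hle.
  rewrite <- !scal_sum in Hle.
  rewrite !mgf in Hle.
  assert (M1 : (p * exp s + (1 - p)) ^ N <= exp (s * p + s * s / 8) ^ N).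
  { apply pow_incr. split. pose proof (exp_pos s). nra. pose proof (hoeff_lemma p s Hp Hs). lra. }
  assert (M2 : (p * exp (- s) + (1 - p)) ^ N <= exp (- s * p + s * s / 8) ^ N).
  { apply pow_incr. split. pose proof (exp_pos (-s)). nra.
    assert (Hq : 0 <= 1 - p <= 1) by lra.
    pose proof (hoeff_lemma (1 - p) s Hq Hs).
    replace (p * exp (- s) + (1 - p)) with (exp (-s) * (1 - (1 - p) + (1 - p) * exp s)).
    2:{ rewrite exp_Ropp. field. apply Rgt_not_eq, exp_pos. }
    replace (exp (- s * p + s * s / 8)) with (exp (-s) * exp (s * (1 - p) + s * s / 8)).
    2:{ rewrite <- exp_plus. f_equal. ring. }
    apply Rmult_le_compat_l. left; apply exp_pos. auto. }
  rewrite <- !exp_mul_nat in M1, M2.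
  assert (E1 : A * exp ((s * p + s * s / 8) * INR N) = exp (INR N * (s * s / 8 - s * d))).
  { unfold A. rewrite <- exp_plus. f_equal. ring. }
  assert (E2 : B * exp ((- s * p + s * s / 8) * INR N) = exp (INR N * (s * s / 8 - s * d))).
  { unfold B. rewrite <- exp_plus. f_equal. ring. }
  assert (0 < A) by apply exp_pos. assert (0 < B) by apply exp_pos.
  apply Rmult_le_compat_l with (r := A) in M1; [|lra].
  apply Rmult_le_compat_l with (r := B) in M2; [|lra].
  lra.
Qed.


Lemma polar c0 X Y : X <> 0 \/ Y <> 0 ->
  exists r, 0 < r /\ X = r * cos (atan2 c0 Y X) /\ Y = r * sin (atan2 c0 Y X).
Proof.
  intros HXY. unfold atan2.
  assert (Hs : forall z, 0 < sqrt (1 + z²)).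
  { intro z. apply sqrt_lt_R0. pose proof (Rle_0_sqr z). lra. }
  destruct (Rlt_dec 0 X) as [HX|HX].
  - exists (X * sqrt (1 + (Y/X)²)). rewrite cos_atan, sin_atan.
    specialize (Hs (Y/X)). split. nra. split; field; lra.
  - destruct (Rlt_dec X 0) as [HX'|HX'].
    + specialize (Hs (Y/X)).
      assert (Hc : forall a, cos (a + PI) = - cos a /\ sin (a + PI) = - sin a /\
                             cos (a - PI) = - cos a /\ sin (a - PI) = - sin a).
      { intro a. rewrite cos_plus, sin_plus, cos_minus, sin_minus, cos_PI, sin_PI. repeat split; ring. }
      exists (- X * sqrt (1 + (Y/X)²)).
      destruct (Rle_dec 0 Y); [rewrite (proj1 (Hc _)), (proj1 (proj2 (Hc _)))
                               | rewrite (proj1 (proj2 (proj2 (Hc _)))), (proj2 (proj2 (proj2 (Hc _))))];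
      rewrite cos_atan, sin_atan; (split; [nra| split; field; lra]).
    + assert (X = 0) by lra. subst X.
      destruct (Rlt_dec 0 Y).
      * exists Y. rewrite cos_PI2, sin_PI2. lra.
      * destruct (Rlt_dec Y 0).
        -- exists (- Y). rewrite cos_neg, sin_neg, cos_PI2, sin_PI2. lra.
        -- exfalso. destruct HXY; lra.
Qed.

Lemma cosZ x k : cos (x - 2 * PI * IZR k) = cos x.
Proof.
  destruct (Z_le_gt_dec 0 k) as [Hk|Hk].
  - rewrite <- (Z2Nat.id k Hk), <- INR_IZR_INZ.
    rewrite <- (cos_period (x - 2 * PI * INR (Z.to_nat k)) (Z.to_nat k)). f_equal. ring.
  - replace k with (- Z.of_nat (Z.to_nat (- k)))%Z by lia.
    rewrite opp_IZR, <- INR_IZR_INZ.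
    rewrite <- (cos_period x (Z.to_nat (- k))). f_equal. ring.
Qed.

Lemma angle_close g : cos g > 1/2 -> exists m : Z, Rabs (g - 2 * PI * IZR m) < PI / 3.
Proof.
  intros Hg. pose proof PI_RGT_0.
  set (k := Int_part ((g + PI) / (2 * PI))).
  destruct (base_Int_part ((g + PI) / (2 * PI))) as [B1 B2]. fold k in B1, B2.
  exists k. set (g' := g - 2 * PI * IZR k).
  assert (Hc : cos g' = cos g) by apply cosZ.
  assert (L1 : 2 * PI * IZR k <= g + PI).
  { apply (Rmult_le_compat_l (2 * PI)) in B1; [|lra]. field_simplify in B1; lra. }
  assert (L2 : g + PI < 2 * PI * IZR k + 2 * PI).
  { assert (HH : (g + PI) / (2 * PI) < IZR k + 1) by lra.
    apply (Rmult_lt_compat_l (2 * PI)) in HH; [|lra]. field_simplify in HH; lra. }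
  unfold Rabs. destruct (Rcase_abs _) as [Hn|Hn]; fold g' in Hn |- *.
  - destruct (Rlt_le_dec (- g') (PI/3)) as [Q|Q]; [unfold g' in *; lra|].
    exfalso. assert (cos (- g') <= cos (PI / 3)) by (apply cos_decr_1; unfold g' in *; lra).
    rewrite cos_neg, cos_PI3 in H0. lra.
  - destruct (Rlt_le_dec g' (PI/3)) as [Q|Q]; [unfold g' in *; lra|].
    exfalso. assert (cos g' <= cos (PI / 3)) by (apply cos_decr_1; unfold g' in *; lra).
    rewrite cos_PI3 in H0. lra.
Qed.

Lemma fmod_int a c : exists k : Z, fmod a c = a - c * IZR k.
Proof. exists (Int_part (a / c)). reflexivity. Qed.

Lemma fmod_unique y K : 0 <= y < 1 -> fmod (y + IZR K) 1 = y.
Proof.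
  intros Hy. unfold fmod. rewrite Rdiv_1_r. unfold Int_part.
  rewrite <- (tech_up (y + IZR K) (K + 1)).
  - rewrite minus_IZR, plus_IZR. ring.
  - rewrite plus_IZR. lra.
  - rewrite plus_IZR. lra.
Qed.

Lemma abs_le_between a b : Rabs a <= b -> -b <= a <= b.
Proof. unfold Rabs; destruct (Rcase_abs a); lra. Qed.

Lemma geom c0 phi X Y :
  Rabs (X - cos (2 * PI * phi)) <= 612 / 1000 -> Rabs (Y - sin (2 * PI * phi)) <= 612 / 1000 ->
  0 < fmod (fmod phi 1 - fmod (fmod (atan2 c0 Y X) (2 * PI) / (2 * PI) - 1 / 6) 1) 1 < 1 / 3.
Proof.
  intros HX HY. pose proof PI_RGT_0 as HPI.
  set (th := 2 * PI * phi). fold th in HX, HY.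
  set (c := cos th) in *. set (s := sin th) in *.
  assert (Hcs : c * c + s * s = 1) by (unfold c, s; pose proof (sin2_cos2 th); unfold Rsqr in *; lra).
  set (dx := X - c) in *. set (dy := Y - s) in *.
  apply abs_le_between in HX. apply abs_le_between in HY.
  assert (Hdx : dx * dx <= 612/1000 * (612/1000)) by nra.
  assert (Hdy : dy * dy <= 612/1000 * (612/1000)) by nra.
  set (w1 := c * dx + s * dy). set (w2 := c * dy - s * dx).
  assert (Hw : w1 * w1 + w2 * w2 = dx * dx + dy * dy).
  { unfold w1, w2. transitivity ((c * c + s * s) * (dx * dx + dy * dy)); [ring| rewrite Hcs; ring]. }
  assert (Hw1s : w1 * w1 < 1) by (pose proof (Rle_0_sqr w2); unfold Rsqr in *; lra).
  assert (Hw1 : -1 < w1).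
  { destruct (Rle_lt_dec w1 (-1)) as [Q|Q]; auto. exfalso. assert (0 <= (-1 - w1) * (1 - w1)) by (apply Rmult_le_pos; lra). lra. }
  assert (Hu : X * c + Y * s = 1 + w1).
  { unfold w1, dx, dy. transitivity (X * c + Y * s + (1 - (c * c + s * s))); [rewrite Hcs; ring| ring]. }
  assert (Hv : Y * c - X * s = w2) by (unfold w2, dx, dy; ring).
  assert (Hkey : 3 * ((1 + w1) * (1 + w1)) > w2 * w2).
  { pose proof (Rle_0_sqr (w1 + 3/4)). unfold Rsqr in *. lra. }
  assert (HXY : X <> 0 \/ Y <> 0).
  { destruct (Req_dec X 0) as [H0x|H0x]; destruct (Req_dec Y 0) as [H0y|H0y]; auto. exfalso. rewrite H0x, H0y in Hu. lra. }
  destruct (polar c0 X Y HXY) as [r [Hr [EX EY]]].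
  set (al := atan2 c0 Y X) in *.
  assert (Hr2 : X * X + Y * Y = r * r).
  { rewrite EX, EY. pose proof (sin2_cos2 al). unfold Rsqr in *. nra. }
  assert (Hr2' : X * X + Y * Y = (1 + w1) * (1 + w1) + w2 * w2).
  { rewrite <- Hu, <- Hv. transitivity ((c * c + s * s) * (X * X + Y * Y)); [rewrite Hcs; ring| ring]. }
  assert (Hlt : r < 2 * (1 + w1)) by nra.
  assert (Hcos : cos (al - th) > 1/2).
  { rewrite cos_minus. fold c s.
    assert (E : cos al * c + sin al * s = (X * c + Y * s) / r).
    { rewrite EX, EY. field. lra. }
    rewrite E, Hu. apply Rlt_gt. apply (Rmult_lt_reg_r r); [lra|]. field_simplify; lra. }
  destruct (angle_close _ Hcos) as [m Hm].
  set (e := al - th - 2 * PI * IZR m) in Hm.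
  apply Rabs_def2 in Hm.
  destruct (fmod_int al (2 * PI)) as [j1 E1]. rewrite E1.
  destruct (fmod_int ((al - 2 * PI * IZR j1) / (2 * PI) - 1 / 6) 1) as [j2 E2]. rewrite E2.
  destruct (fmod_int phi 1) as [j3 E3]. rewrite E3.
  set (y := 1/6 - e / (2 * PI)).
  assert (Ey : phi - 1 * IZR j3 - ((al - 2 * PI * IZR j1) / (2 * PI) - 1 / 6 - 1 * IZR j2)
               = y + IZR (j1 + j2 - j3 - m)).
  { unfold y, e, th. rewrite !minus_IZR, !plus_IZR. field. lra. }
  rewrite Ey.
  assert (Hy : 0 < y < 1/3).
  { unfold y. split.
    - assert (e / (2 * PI) < 1/6). { apply (Rmult_lt_reg_r (2 * PI)); [lra|]. field_simplify; lra. } lra.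
    - assert (-(1/6) < e / (2 * PI)). { apply (Rmult_lt_reg_r (2 * PI)); [lra|]. field_simplify; lra. } lra. }
  rewrite fmod_unique by lra. auto.
Qed.


Theorem mainTheorem3 (c0 : R) (l : nat) (eps phi : R) (N : nat) :
  (0 < l)%nat -> 0 < eps < 1 -> (0 < N)%nat ->
  INR N >= 534 / 100 * ln (4 * INR l / eps) ->
  let px := (1 + cos (2 * PI * phi)) / 2 in
  let py := (1 + sin (2 * PI * phi)) / 2 in
  prob_indep_binom N px py
    (fun a _ => Rabs (INR a / INR N - px) <= 306 / 1000)
    >= sqrt (1 - eps / INR l) /\
  prob_indep_binom N px py
    (fun _ b => Rabs (INR b / INR N - py) <= 306 / 1000)
    >= sqrt (1 - eps / INR l) /\
  prob_indep_binom N px py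
    (fun a b =>
       let t := fmod (atan2 c0 (2 * INR b / INR N - 1) (2 * INR a / INR N - 1))
                     (2 * PI) / (2 * PI) in
       let x := fmod (t - 1 / 6) 1 in
       0 < fmod (fmod phi 1 - x) 1 < 1 / 3)
    >= 1 - eps / INR l.

Proof.
  intros Hl Heps HN Hbound px py.
  pose proof PI_RGT_0 as HPI.
  set (d := 306 / 1000). set (s := 1224 / 1000).
  set (eta := 2 * exp (INR N * (s * s / 8 - s * d))).
  assert (Hlr : 1 <= INR l) by (apply (le_INR 1); lia).
  assert (HNr : 0 < INR N) by (apply lt_0_INR; lia).
  assert (Heta : eta <= eps / (2 * INR l)).
  { set (L := ln (4 * INR l / eps)) in *.
    assert (HL : 0 < L).
    { unfold L. rewrite <- ln_1. apply ln_increasing. lra.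
      apply (Rmult_lt_reg_r eps); [lra|]. field_simplify; lra. }
    assert (E : eps / (4 * INR l) = exp (- L)).
    { unfold L. rewrite exp_Ropp, exp_ln. field; split; lra.
      apply Rdiv_lt_0_compat; lra. }
    assert (exp (INR N * (s * s / 8 - s * d)) <= exp (- L)).
    { apply exp_le'. unfold s, d. lra. }
    unfold eta. assert (eps / (2 * INR l) = 2 * (eps / (4 * INR l))) by (field; lra). lra. }
  assert (Heta0 : 0 <= eta) by (unfold eta; pose proof (exp_pos (INR N * (s * s / 8 - s * d))); lra).
  assert (Hel : eps / INR l <= 1).
  { apply (Rmult_le_reg_r (INR l)); [lra|]. field_simplify; lra. }
  assert (Hel0 : 0 <= eps / INR l) by (apply Rmult_le_pos; [lra| left; apply Rinv_0_lt_compat; lra]).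
  assert (Hhalf : eps / (2 * INR l) = (eps / INR l) / 2) by (field; lra).
  assert (Hpx : 0 <= px <= 1) by (unfold px; pose proof (COS_bound (2 * PI * phi)); lra).
  assert (Hpy : 0 <= py <= 1) by (unfold py; pose proof (SIN_bound (2 * PI * phi)); lra).
  assert (Hd : 0 < d) by (unfold d; lra). assert (Hs : 0 <= s) by (unfold s; lra).
  pose proof (tail N px d s HN Hpx Hd Hs) as Tx. fold eta in Tx.
  pose proof (tail N py d s HN Hpy Hd Hs) as Ty. fold eta in Ty.
  set (SX := sum_f_R0 (fun k => binom_pmf N px k * indic (Rabs (INR k / INR N - px) <= d)) N) in *.
  set (SY := sum_f_R0 (fun k => binom_pmf N py k * indic (Rabs (INR k / INR N - py) <= d)) N) in *.
  assert (Hsq : sqrt (1 - eps / INR l) <= 1 - eps / INR l / 2).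
  { rewrite <- (sqrt_square (1 - eps / INR l / 2)) by lra. apply sqrt_le_1_alt. nra. }
  assert (Inner : forall (a : nat) (x : R),
     sum_f_R0 (fun b => x * binom_pmf N py b) N = x).
  { intros a x. rewrite (sum_eq _ (fun b => binom_pmf N py b * x)) by (intros; ring).
    rewrite <- scal_sum, pmf_sum. ring. }
  split; [|split].
  - unfold prob_indep_binom.
    rewrite (sum_eq _ (fun a => binom_pmf N px a * indic (Rabs (INR a / INR N - px) <= d))).
    + fold SX. apply Rle_ge. lra.
    + intros a _. rewrite <- (Inner a (binom_pmf N px a * indic (Rabs (INR a / INR N - px) <= d))).
      apply sum_eq. intros; ring.
  - unfold prob_indep_binom.
    rewrite (sum_eq _ (fun a => binom_pmf N px a * SY)).
    + rewrite <- scal_sum, pmf_sum. apply Rle_ge. lra.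
    + intros a _. unfold SY. rewrite scal_sum. apply sum_eq. intros; ring.
  - unfold prob_indep_binom.
    apply Rle_ge.
    apply Rle_trans with (SX * SY).
    { assert (1 - eta <= SX) by lra. assert (1 - eta <= SY) by lra.
      assert (0 <= 1 - eta) by lra.
      assert ((1 - eta) * (1 - eta) <= SX * SY) by (apply Rmult_le_compat; lra). nra. }
    unfold SX. rewrite Rmult_comm, scal_sum. apply sum_Rle. intros a _.
    unfold SY. rewrite scal_sum. apply sum_Rle. intros b _.
    pose proof (pmf_nonneg N px a Hpx). pose proof (pmf_nonneg N py b Hpy).
    destruct (Rle_dec (Rabs (INR a / INR N - px)) d) as [Ga|Ga].
    2:{ rewrite (indic_false _ Ga). match goal with |- ?L <= _ => replace L with 0 by ring end.
        apply Rmult_le_pos; [apply Rmult_le_pos; auto| apply indic_bounds]. }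
    destruct (Rle_dec (Rabs (INR b / INR N - py)) d) as [Gb|Gb].
    2:{ rewrite (indic_false _ Gb). match goal with |- ?L <= _ => replace L with 0 by ring end.
        apply Rmult_le_pos; [apply Rmult_le_pos; auto| apply indic_bounds]. }
    rewrite (indic_true _ Ga), (indic_true _ Gb), indic_true. lra.
    apply abs_le_between in Ga. apply abs_le_between in Gb.
    apply geom.
    + apply Rabs_le. unfold px, d in *.
      replace (2 * INR a / INR N - 1 - cos (2 * PI * phi)) with (2 * (INR a / INR N - (1 + cos (2 * PI * phi)) / 2)) by (field; lra). lra.
    + apply Rabs_le. unfold py, d in *.
      replace (2 * INR b / INR N - 1 - sin (2 * PI * phi)) with (2 * (INR b / INR N - (1 + sin (2 * PI * phi)) / 2)) by (field; lra). lra.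
Qed.
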